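(* Assume Assumption A and that the limiting chain $X_R$ has $\mathfrak n\ge2$ recurrent classes $\mathscr E_1,\dots,\mathscr E_{\mathfrak n}$; let $\breve{\mathscr E}_x=\bigcup_{y\ne x}\mathscr E_y$. Then the family of sequences $\big(\mathrm{Cap}_N(\mathscr E_x,\breve{\mathscr E}_x)/\mu_N(\mathscr E_x)\big)_{N\ge1}$, $x\in\{1,\dots,\mathfrak n\}$, is ordered.
   Context: Setting: $E$ is a fixed finite set; for each $N\ge1$, $(\eta^N_t)$ is a continuous-time irreducible Markov chain on $E$ with jump rates $R_N(\eta,\xi)$, holding rates $\lambda_N(\eta)=\sum_{\xi\ne\eta}R_N(\eta,\xi)$, unique invariant probability measure $\mu_N$; $\mathbb P_\eta$ the law started at $\eta$; $H_A=\inf\{t>0:\eta^N_t\in A\}$, $H^+_A=\inf\{t>\tau_1:\eta^N_t\in A\}$, $\tau_1$ first jump time; $\mathrm{Cap}_N(A,B)=\sum_{\eta\in A}\mu_N(\eta)\lambda_N(\eta)\mathbb P_\eta[H_B<H^+_A]$. Ordered families: a finite family of sequences of positive reals $(a^r_N)$, $r\in\mathfrak R$, is ordered if for all $r\neq s$, $\arctan(a^r_N/a^s_N)$ converges. Assumption A: (i) for each $\eta\neq\xi$, either $R_N(\eta,\xi)=0$ for all $N$ or $R_N(\eta,\xi)>0$ for all $N$; let $\mathbb B$ be the set of pairs with positive rates. (ii) For every $m\ge1$ the family $\prod_{(\eta,\xi)\in\mathbb B}R_N(\eta,\xi)^{k(\eta,\xi)}$, $k:\mathbb B\to\mathbb Z_+$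 with $\sum k=m$, is ordered. Limiting chain: $\alpha_N^{-1}=\sum_\eta\sum_{\xi\ne\eta}R_N(\eta,\xi)$; $R(\eta,\xi)=\lim_N\alpha_NR_N(\eta,\xi)\in[0,1]$; $X_R$ is the Markov chain on $E$ with rates $R$. *)

(* Defs.v *)
From Stdlib Require Import Reals Lra Relations ClassicalEpsilon.
Open Scope R_scope.

(* The finite state space E is {0, ..., d-1} (states are nats < d).
   A sequence of rate matrices is RN : nat -> nat -> nat -> R, with
   RN N eta xi = R_N(eta, xi). *)

Fixpoint sumR (n : nat) (f : nat -> R) : R :=
  match n with O => 0 | S n' => sumR n' f + f n' end.

Fixpoint prodR (n : nat) (f : nat -> R) : R :=
  match n with O => 1 | S n' => prodR n' f * f n' end.

Fixpoint sumN (n : nat) (f : nat -> nat) : nat :=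
  match n with O => O | S n' => (sumN n' f + f n')%nat end.

(* the limit of a real sequence (chosen classically; meaningful when it exists) *)
Definition lim (u : nat -> R) : R := epsilon (inhabits 0) (fun l => Un_cv u l).

Definition decP (P : Prop) : bool :=
  if excluded_middle_informative P then true else false.

Definition holding (d : nat) (R0 : nat -> nat -> R) (eta : nat) : R :=
  sumR d (fun xi => if Nat.eq_dec xi eta then 0 else R0 eta xi).

Definition jumpP (d : nat) (R0 : nat -> nat -> R) (eta xi : nat) : R :=
  if Nat.eq_dec xi eta then 0 else R0 eta xi / holding d R0 eta.

(* probability, started at xi, that the chain is in B before (or at the same
   time as first being in) A within n jumps; being in B (resp. A) at time 0
   counts as H_B = 0 (resp. H_A = 0), as the paths are right-continuous. *)
Fixpoint hit_within (d : nat) (R0 : nat -> nat -> R) (A B : nat -> Prop)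
  (n : nat) (xi : nat) : R :=
  if decP (B xi) then 1 else if decP (A xi) then 0 else
  match n with
  | O => 0
  | S n' => sumR d (fun z => jumpP d R0 xi z * hit_within d R0 A B n' z)
  end.

(* P_eta[H_B < H_A^+] : after the first jump, hit B before A *)
Definition escape (d : nat) (R0 : nat -> nat -> R) (A B : nat -> Prop)
  (eta : nat) : R :=
  lim (fun n => sumR d (fun z => jumpP d R0 eta z * hit_within d R0 A B n z)).

Definition Cap (d : nat) (R0 : nat -> nat -> R) (mu : nat -> R)
  (A B : nat -> Prop) : R :=
  sumR d (fun eta => if decP (A eta)
                     then mu eta * holding d R0 eta * escape d R0 A B eta
                     else 0).

Definition measure (d : nat) (mu : nat -> R) (A : nat -> Prop) : R :=
  sumR d (fun eta => if decP (A eta) then mu eta else 0).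

Definition edge (d : nat) (R0 : nat -> nat -> R) (eta xi : nat) : Prop :=
  (eta < d)%nat /\ (xi < d)%nat /\ eta <> xi /\ 0 < R0 eta xi.

Definition reach (d : nat) (R0 : nat -> nat -> R) : nat -> nat -> Prop :=
  clos_refl_trans nat (edge d R0).

Definition irreducible (d : nat) (R0 : nat -> nat -> R) : Prop :=
  forall eta xi, (eta < d)%nat -> (xi < d)%nat -> reach d R0 eta xi.

Definition invariant_prob (d : nat) (R0 : nat -> nat -> R) (mu : nat -> R) : Prop :=
  (forall eta, (eta < d)%nat -> 0 <= mu eta) /\
  sumR d mu = 1 /\
  (forall xi, (xi < d)%nat ->
     sumR d (fun eta => if Nat.eq_dec eta xi then 0 else mu eta * R0 eta xi)
     = mu xi * holding d R0 xi).

Definition ordered_on {I : Type} (P : I -> Prop) (a : I -> nat -> R) : Prop :=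
  forall r s, P r -> P s -> r <> s ->
    exists l, Un_cv (fun N => atan (a r N / a s N)) l.

Definition Bset (d : nat) (RN : nat -> nat -> nat -> R) (eta xi : nat) : Prop :=
  (eta < d)%nat /\ (xi < d)%nat /\ eta <> xi /\ forall N, 0 < RN N eta xi.

Definition monomial (d : nat) (RN : nat -> nat -> nat -> R)
  (k : nat -> nat -> nat) (N : nat) : R :=
  prodR d (fun eta => prodR d (fun xi => RN N eta xi ^ k eta xi)).

Definition ksum (d : nat) (k : nat -> nat -> nat) : nat :=
  sumN d (fun eta => sumN d (fun xi => k eta xi)).

Definition AssumptionA (d : nat) (RN : nat -> nat -> nat -> R) : Prop :=
  (forall eta xi, (eta < d)%nat -> (xi < d)%nat -> eta <> xi ->
     (forall N, RN N eta xi = 0) \/ (forall N, 0 < RN N eta xi)) /\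
  (forall m : nat, (1 <= m)%nat ->
     ordered_on
       (fun k : nat -> nat -> nat =>
          (forall eta xi, ~ Bset d RN eta xi -> k eta xi = O) /\ ksum d k = m)
       (fun k N => monomial d RN k N)).

Definition alpha (d : nat) (RN : nat -> nat -> nat -> R) (N : nat) : R :=
  / sumR d (fun eta => holding d (RN N) eta).

Definition Rlim (d : nat) (RN : nat -> nat -> nat -> R) (eta xi : nat) : R :=
  lim (fun N => alpha d RN N * RN N eta xi).

Definition recurrent (d : nat) (R0 : nat -> nat -> R) (eta : nat) : Prop :=
  (eta < d)%nat /\ forall xi, reach d R0 eta xi -> reach d R0 xi eta.

Definition rclass (d : nat) (R0 : nat -> nat -> R) (a : nat) : nat -> Prop :=
  fun eta => recurrent d R0 eta /\ reach d R0 a eta /\ reach d R0 eta a.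

Definition rbreve (d : nat) (R0 : nat -> nat -> R) (a : nat) : nat -> Prop :=
  fun eta => recurrent d R0 eta /\ ~ (reach d R0 a eta /\ reach d R0 eta a).

(* Main.v *)
Require Import Defs.
From Stdlib Require Import Reals Lra Lia Relations ClassicalEpsilon List.
Open Scope R_scope.

Lemma sumR_ext n f g : (forall i, (i < n)%nat -> f i = g i) -> sumR n f = sumR n g.
Proof. induction n; simpl; intros H; [reflexivity|]. rewrite IHn by (intros; apply H; lia). rewrite H by lia. reflexivity. Qed.

Lemma sumR_plus n f g : sumR n (fun i => f i + g i) = sumR n f + sumR n g.
Proof. induction n; simpl; [lra|]. rewrite IHn. lra. Qed.

Lemma sumR_scal n c f : sumR n (fun i => c * f i) = c * sumR n f.
Proof. induction n; simpl; [lra|]. rewrite IHn. lra. Qed.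

Lemma sumR_zero n : sumR n (fun _ => 0) = 0.
Proof. induction n; simpl; [lra|]. rewrite IHn. lra. Qed.

Lemma sumR_nonneg n f : (forall i, (i < n)%nat -> 0 <= f i) -> 0 <= sumR n f.
Proof. induction n; simpl; intros H; [lra|]. assert (0 <= f n) by (apply H; lia).
 assert (0 <= sumR n f) by (apply IHn; intros; apply H; lia). lra. Qed.

Lemma sumR_le n f g : (forall i, (i < n)%nat -> f i <= g i) -> sumR n f <= sumR n g.
Proof. induction n; simpl; intros H; [lra|]. assert (f n <= g n) by (apply H; lia).
 assert (sumR n f <= sumR n g) by (apply IHn; intros; apply H; lia). lra. Qed.

Lemma sumR_term n f u : (u < n)%nat -> (forall i, (i < n)%nat -> 0 <= f i) -> f u <= sumR n f.
Proof. induction n; simpl; intros Hu H; [lia|].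
 assert (0 <= sumR n f) by (apply sumR_nonneg; intros; apply H; lia).
 assert (0 <= f n) by (apply H; lia).
 destruct (Nat.eq_dec u n). subst; lra. assert (f u <= sumR n f) by (apply IHn; [lia| intros; apply H; lia]). lra. Qed.

Lemma sumR_split n f u : (u < n)%nat ->
  sumR n f = sumR n (fun b => if Nat.eq_dec b u then 0 else f b) + f u.
Proof. induction n; simpl; intros Hu; [lia|].
 destruct (Nat.eq_dec n u).
 - subst. rewrite (sumR_ext _ (fun b => if Nat.eq_dec b u then 0 else f b) f). lra.
   intros i Hi. destruct (Nat.eq_dec i u); [lia|auto].
 - rewrite IHn by lia. lra. Qed.

Lemma sumR_pos n f u : (u < n)%nat -> (forall i, (i < n)%nat -> 0 <= f i) -> 0 < f u -> 0 < sumR n f.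
Proof. intros. pose proof (sumR_term n f u H H0). lra. Qed.

Lemma sumR_eq0 n f : (forall i, (i < n)%nat -> 0 <= f i) -> sumR n f = 0 -> forall i, (i < n)%nat -> f i = 0.
Proof. intros H Hs i Hi. pose proof (sumR_term n f i Hi H). pose proof (H i Hi). lra. Qed.

Lemma prodR_ext n f g : (forall i, (i < n)%nat -> f i = g i) -> prodR n f = prodR n g.
Proof. induction n; simpl; intros H; [reflexivity|]. rewrite IHn by (intros; apply H; lia). rewrite H by lia. reflexivity. Qed.

Lemma prodR_mult n f g : prodR n (fun i => f i * g i) = prodR n f * prodR n g.
Proof. induction n; simpl; [lra|]. rewrite IHn. ring. Qed.

Lemma prodR_one n : prodR n (fun _ => 1) = 1.
Proof. induction n; simpl; [lra|]. rewrite IHn. lra. Qed.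

Lemma prodR_pos n f : (forall i, (i < n)%nat -> 0 < f i) -> 0 < prodR n f.
Proof. induction n; simpl; intros H; [lra|]. apply Rmult_lt_0_compat. apply IHn; intros; apply H; lia. apply H; lia. Qed.

Lemma prodR_single n f u : (u < n)%nat -> (forall i, (i < n)%nat -> i <> u -> f i = 1) -> prodR n f = f u.
Proof. induction n; simpl; intros Hu H; [lia|].
 destruct (Nat.eq_dec n u).
 - subst. rewrite (prodR_ext _ f (fun _ => 1)). rewrite prodR_one. lra. intros; apply H; lia.
 - rewrite IHn by (auto; lia). rewrite (H n) by lia. lra. Qed.

Lemma sumN_ext n f g : (forall i, (i < n)%nat -> f i = g i) -> sumN n f = sumN n g.
Proof. induction n; simpl; intros H; [reflexivity|]. rewrite IHn by (intros; apply H; lia). rewrite H by lia. reflexivity. Qed.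

Lemma sumN_plus n f g : sumN n (fun i => f i + g i)%nat = (sumN n f + sumN n g)%nat.
Proof. induction n; simpl; [lia|]. rewrite IHn. lia. Qed.

Lemma sumN_zero n : sumN n (fun _ => 0%nat) = 0%nat.
Proof. induction n; simpl; [lia|]. rewrite IHn. lia. Qed.

Lemma sumN_single n f u : (u < n)%nat -> (forall i, (i < n)%nat -> i <> u -> f i = 0%nat) -> sumN n f = f u.
Proof. induction n; simpl; intros Hu H; [lia|].
 destruct (Nat.eq_dec n u).
 - subst. rewrite (sumN_ext _ f (fun _ => 0%nat)). rewrite sumN_zero. lia. intros; apply H; lia.
 - rewrite IHn by (auto; lia). rewrite (H n) by lia. lia. Qed.

Lemma sumN_eq0 n f : sumN n f = 0%nat -> forall i, (i < n)%nat -> f i = 0%nat.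
Proof. induction n; simpl; intros H i Hi; [lia|]. destruct (Nat.eq_dec i n). subst; lia. apply IHn; lia. Qed.

Definition valid (d : nat) (RN : nat -> nat -> nat -> R) (m : nat) (k : nat -> nat -> nat) : Prop :=
  (forall eta xi, ~ Bset d RN eta xi -> k eta xi = 0%nat) /\ ksum d k = m.

Definition evalL (d : nat) (RN : nat -> nat -> nat -> R) (L : list (R * (nat -> nat -> nat))) (N : nat) : R :=
  fold_right (fun p acc => fst p * monomial d RN (snd p) N + acc) 0 L.

Definition Good d RN m (f : nat -> R) : Prop :=
  exists L, Forall (fun p => 0 <= fst p /\ valid d RN m (snd p)) L /\ forall N, f N = evalL d RN L N.

Definition HR d RN k (f : nat -> R) : Prop :=
  exists n p q, Good d RN (n + k) p /\ Good d RN n q /\ (forall N, 0 < q N) /\ forall N, f N = p N / q N.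


Lemma mono_pos d RN m k N : valid d RN m k -> 0 < monomial d RN k N.
Proof. intros [H _]. unfold monomial. apply prodR_pos; intros a Ha. apply prodR_pos; intros b Hb.
 destruct (classic (Bset d RN a b)) as [HB|HB].
 - apply pow_lt. destruct HB as (_&_&_&HB). apply HB.
 - rewrite H by auto. simpl. lra. Qed.

Lemma mono_add d RN k1 k2 N :
  monomial d RN (fun a b => (k1 a b + k2 a b)%nat) N = monomial d RN k1 N * monomial d RN k2 N.
Proof. unfold monomial. rewrite <- prodR_mult. apply prodR_ext; intros. rewrite <- prodR_mult.
 apply prodR_ext; intros. apply pow_add. Qed.

Lemma valid_add d RN m1 m2 k1 k2 : valid d RN m1 k1 -> valid d RN m2 k2 ->
  valid d RN (m1 + m2) (fun a b => (k1 a b + k2 a b)%nat).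
Proof. intros [H1 S1] [H2 S2]. split. intros; rewrite H1, H2 by auto; lia.
 unfold ksum in *. rewrite <- S1, <- S2. rewrite <- sumN_plus. apply sumN_ext; intros.
 apply sumN_plus. Qed.

Lemma evalL_app d RN L1 L2 N : evalL d RN (L1 ++ L2) N = evalL d RN L1 N + evalL d RN L2 N.
Proof. induction L1; simpl; [lra|]. unfold evalL in *; simpl. rewrite IHL1. lra. Qed.

Lemma evalL_nonneg d RN m L N : Forall (fun p => 0 <= fst p /\ valid d RN m (snd p)) L -> 0 <= evalL d RN L N.
Proof. induction 1; unfold evalL; simpl; [lra|]. destruct H as [H1 H2].
 pose proof (mono_pos d RN m (snd x) N H2). fold (evalL d RN l N). nra. Qed.

Lemma Good_nonneg d RN m f N : Good d RN m f -> 0 <= f N.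
Proof. intros (L&HL&E). rewrite E. eapply evalL_nonneg; eauto. Qed.

Lemma evalL_dich d RN m L : Forall (fun p => 0 <= fst p /\ valid d RN m (snd p)) L ->
  (forall N, evalL d RN L N = 0) \/ (forall N, 0 < evalL d RN L N).
Proof. induction 1; [left; reflexivity|].
 assert (EE: forall N, evalL d RN (x :: l) N = fst x * monomial d RN (snd x) N + evalL d RN l N) by reflexivity.
 destruct H as [H1 H2]. destruct (Req_dec (fst x) 0) as [E|E].
 - destruct IHForall as [A|A]; [left|right]; intros N; rewrite EE, E; specialize (A N); lra.
 - right. intros N. rewrite EE. pose proof (mono_pos d RN m (snd x) N H2). pose proof (evalL_nonneg d RN m l N H0).
   assert (0 < fst x) by lra. nra. Qed.

Lemma Good_dich d RN m f : Good d RN m f -> (forall N, f N = 0) \/ (forall N, 0 < f N).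
Proof. intros (L&HL&E). destruct (evalL_dich d RN m L HL) as [A|A]; [left|right]; intros N; rewrite E; apply A. Qed.

Lemma Good_ext d RN m f g : Good d RN m f -> (forall N, f N = g N) -> Good d RN m g.
Proof. intros (L&HL&E) H. exists L; split; auto. intros; rewrite <- H; auto. Qed.

Lemma Good_deg d RN m m' f : Good d RN m f -> m = m' -> Good d RN m' f.
Proof. intros; subst; auto. Qed.

Lemma Good_zero d RN m : Good d RN m (fun _ => 0).
Proof. exists nil. split; auto. Qed.

Lemma Good_one d RN : Good d RN 0 (fun _ => 1).
Proof. exists ((1, fun _ _ => 0%nat) :: nil). split.
 - constructor; [|constructor]. simpl. split; [lra|]. split; auto. unfold ksum.
   rewrite (sumN_ext _ _ (fun _ => 0%nat)). apply sumN_zero. intros; apply sumN_zero.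
 - intros N. unfold evalL, monomial; simpl. rewrite (prodR_ext _ _ (fun _ => 1)). rewrite prodR_one. lra.
   intros. transitivity (prodR d (fun _ => 1)); [apply prodR_ext; intros; simpl; lra | apply prodR_one]. Qed.

Lemma Good_add d RN m f g : Good d RN m f -> Good d RN m g -> Good d RN m (fun N => f N + g N).
Proof. intros (L1&H1&E1) (L2&H2&E2). exists (L1 ++ L2). split. apply Forall_app; auto.
 intros; rewrite evalL_app, E1, E2; auto. Qed.

Definition scaleL (c : R) k (L : list (R * (nat -> nat -> nat))) :=
  map (fun p => (c * fst p, fun a b => (k a b + snd p a b)%nat)) L.

Lemma evalL_scale d RN c k L N : evalL d RN (scaleL c k L) N = c * monomial d RN k N * evalL d RN L N.
Proof. induction L; unfold evalL in *; simpl; [lra|]. rewrite IHL, mono_add. ring. Qed.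

Definition prodL (L1 L2 : list (R * (nat -> nat -> nat))) :=
  flat_map (fun p => scaleL (fst p) (snd p) L2) L1.

Lemma evalL_prod d RN L1 L2 N : evalL d RN (prodL L1 L2) N = evalL d RN L1 N * evalL d RN L2 N.
Proof. induction L1; simpl; [unfold evalL; simpl; lra|]. unfold prodL in *; simpl.
 rewrite evalL_app, IHL1, evalL_scale. unfold evalL; simpl. ring. Qed.

Lemma Good_mul d RN m1 m2 f g : Good d RN m1 f -> Good d RN m2 g -> Good d RN (m1 + m2) (fun N => f N * g N).
Proof. intros (L1&H1&E1) (L2&H2&E2). exists (prodL L1 L2). split.
 - unfold prodL. apply Forall_flat_map. eapply Forall_impl; [|apply H1]. intros [c k] [Hc Hk]. simpl.
   apply Forall_map. eapply Forall_impl; [|apply H2]. intros [c' k'] [Hc' Hk']. simpl in *. split. apply Rmult_le_pos; auto.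
   apply valid_add; auto.
 - intros; rewrite evalL_prod, E1, E2; auto. Qed.

Lemma Good_rate d RN eta xi : AssumptionA d RN -> (eta < d)%nat -> (xi < d)%nat -> eta <> xi ->
  Good d RN 1 (fun N => RN N eta xi).
Proof. intros [A1 _] He Hx Hne.
 destruct (classic (Bset d RN eta xi)) as [HB|HB].
 - set (k := fun a b => if andb (Nat.eqb a eta) (Nat.eqb b xi) then 1%nat else 0%nat).
   exists ((1, k) :: nil). split.
   + constructor; [|constructor]. simpl. split; [lra|]. split.
     * intros a b Hab. unfold k. destruct (Nat.eqb_spec a eta), (Nat.eqb_spec b xi); simpl; auto. subst; tauto.
     * unfold ksum. rewrite (sumN_single _ _ eta He).
       -- rewrite (sumN_single _ _ xi Hx). unfold k. rewrite !Nat.eqb_refl. reflexivity.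
          intros j _ Hj. unfold k. rewrite Nat.eqb_refl. destruct (Nat.eqb_spec j xi); [lia|reflexivity].
       -- intros i _ Hi. rewrite (sumN_ext _ _ (fun _ => 0%nat)). apply sumN_zero.
          intros j _. unfold k. destruct (Nat.eqb_spec i eta); [lia|reflexivity].
   + intros N. unfold evalL, monomial; simpl. rewrite (prodR_single _ _ eta He).
     rewrite (prodR_single _ _ xi Hx). unfold k. rewrite !Nat.eqb_refl. simpl. ring.
     intros j _ Hj. unfold k. rewrite Nat.eqb_refl. destruct (Nat.eqb_spec j xi); [lia|reflexivity].
     intros i _ Hi. rewrite (prodR_ext _ _ (fun _ => 1)). apply prodR_one.
     intros j _. unfold k. destruct (Nat.eqb_spec i eta); [lia|reflexivity].
 - destruct (A1 eta xi He Hx Hne) as [Z|P].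
   + eapply Good_ext. apply Good_zero. intros; simpl; rewrite Z; reflexivity.
   + exfalso; apply HB; repeat split; auto. Qed.

Lemma HR_of_Good d RN k f : Good d RN k f -> HR d RN k f.
Proof. intros G. exists 0%nat, f, (fun _ => 1). split; [simpl; auto|]. split; [apply Good_one|].
 split; intros; [lra|]. field. Qed.

Lemma HR_ext d RN k f g : HR d RN k f -> (forall N, f N = g N) -> HR d RN k g.
Proof. intros (n&p&q&H1&H2&H3&H4) E. exists n, p, q; repeat split; auto. intros; rewrite <- E; auto. Qed.

Lemma HR_zero d RN k : HR d RN k (fun _ => 0).
Proof. apply HR_of_Good, Good_zero. Qed.

Lemma HR_one d RN : HR d RN 0 (fun _ => 1).
Proof. apply HR_of_Good, Good_one. Qed.

Lemma HR_add d RN k f g : HR d RN k f -> HR d RN k g -> HR d RN k (fun N => f N + g N).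
Proof. intros (n1&p1&q1&P1&Q1&Q1p&E1) (n2&p2&q2&P2&Q2&Q2p&E2).
 exists (n1 + n2)%nat, (fun N => p1 N * q2 N + p2 N * q1 N), (fun N => q1 N * q2 N).
 split; [|split; [|split]].
 - apply Good_add; eapply Good_deg; [apply Good_mul; eauto| lia | apply Good_mul; eauto | lia].
 - apply Good_mul; auto.
 - intros; apply Rmult_lt_0_compat; auto.
 - intros N. rewrite E1, E2. specialize (Q1p N). specialize (Q2p N). field. lra. Qed.

Lemma HR_mul d RN k1 k2 f g : HR d RN k1 f -> HR d RN k2 g -> HR d RN (k1 + k2) (fun N => f N * g N).
Proof. intros (n1&p1&q1&P1&Q1&Q1p&E1) (n2&p2&q2&P2&Q2&Q2p&E2).
 exists (n1 + n2)%nat, (fun N => p1 N * p2 N), (fun N => q1 N * q2 N).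
 split; [|split; [|split]].
 - eapply Good_deg; [apply Good_mul; eauto| lia].
 - apply Good_mul; auto.
 - intros; apply Rmult_lt_0_compat; auto.
 - intros N. rewrite E1, E2. specialize (Q1p N). specialize (Q2p N). field. lra. Qed.

Lemma HR_div d RN k j f g : HR d RN k f -> HR d RN j g -> (j <= k)%nat -> (forall N, 0 < g N) ->
  HR d RN (k - j) (fun N => f N / g N).
Proof. intros (n1&p1&q1&P1&Q1&Q1p&E1) (n2&p2&q2&P2&Q2&Q2p&E2) Hjk Gp.
 assert (Pp : forall N, 0 < p2 N).
 { intros N. specialize (Gp N). rewrite E2 in Gp. pose proof (Good_nonneg _ _ _ _ N P2). specialize (Q2p N).
   destruct H; auto. rewrite <- H in Gp. unfold Rdiv in Gp. lra. }
 exists (n1 + n2 + j)%nat, (fun N => p1 N * q2 N), (fun N => q1 N * p2 N).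
 split; [|split; [|split]].
 - eapply Good_deg; [apply Good_mul; eauto| lia].
 - eapply Good_deg; [apply Good_mul; eauto| lia].
 - intros; apply Rmult_lt_0_compat; auto.
 - intros N. rewrite E1, E2. specialize (Q1p N). specialize (Q2p N). specialize (Pp N). field. lra. Qed.

Lemma HR_dich d RN k f : HR d RN k f -> (forall N, f N = 0) \/ (forall N, 0 < f N).
Proof. intros (n&p&q&P&Q&Qp&E). destruct (Good_dich _ _ _ _ P) as [Z|Z]; [left|right]; intros N;
 rewrite E; specialize (Qp N); specialize (Z N). rewrite Z; unfold Rdiv; lra. apply Rdiv_lt_0_compat; auto. Qed.

Lemma HR_nonneg d RN k f N : HR d RN k f -> 0 <= f N.
Proof. intros H. destruct (HR_dich _ _ _ _ H) as [Z|Z]; specialize (Z N); lra. Qed.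

Lemma HR_sum d RN k n (b : nat -> bool) (f : nat -> nat -> R) :
  (forall w, (w < n)%nat -> b w = true -> HR d RN k (f w)) ->
  HR d RN k (fun N => sumR n (fun w => if b w then f w N else 0)).
Proof. induction n; intros H; simpl.
 - apply HR_zero.
 - apply HR_add. apply IHn; intros; apply H; auto; lia.
   destruct (b n) eqn:E. apply H; auto. apply HR_zero. Qed.

Lemma cv_const (c : R) : Un_cv (fun _ => c) c.
Proof. intros eps He. exists 0%nat. intros. unfold R_dist. rewrite Rminus_diag, Rabs_R0. lra. Qed.

Lemma cv_ext u v l : Un_cv u l -> (forall N, u N = v N) -> Un_cv v l.
Proof. intros H E eps He. destruct (H eps He) as [N0 HN]. exists N0. intros; rewrite <- E; auto. Qed.

Lemma cv_inv u q : Un_cv u q -> q <> 0 -> Un_cv (fun N => / u N) (/ q).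
Proof. intros H Hq. apply (continuity_seq (fun x => / x)); auto.
 change (continuity_pt (/ id) q). apply continuity_pt_inv; [apply derivable_continuous_pt, derivable_pt_id|]. exact Hq. Qed.

Lemma cv_div u v a b : Un_cv u a -> Un_cv v b -> b <> 0 -> Un_cv (fun N => u N / v N) (a / b).
Proof. intros. unfold Rdiv. apply CV_mult; auto. apply cv_inv; auto. Qed.

Lemma cv_atan u l : Un_cv u l -> Un_cv (fun N => atan (u N)) (atan l).
Proof. intros. apply continuity_seq; auto. apply derivable_continuous_pt, derivable_pt_atan. Qed.

Lemma cv_tan u l : Un_cv u l -> - (PI/2) < l < PI/2 -> Un_cv (fun N => tan (u N)) (tan l).
Proof. intros. apply continuity_seq; auto. apply derivable_continuous_pt, derivable_pt_tan. lra. Qed.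

Lemma atan_nonneg x : 0 <= x -> 0 <= atan x.
Proof. intros H. destruct H. pose proof (atan_increasing 0 x H). rewrite atan_0 in H0. lra. subst. rewrite atan_0. lra. Qed.

Lemma atan_cv_cases (x : nat -> R) l : (forall N, 0 < x N) -> Un_cv (fun N => atan (x N)) l ->
  (exists c, Un_cv x c) \/ Un_cv (fun N => / x N) 0.
Proof. intros Hp H.
 assert (Hl0 : 0 <= l). { apply (Rle_cv_lim (Un := fun _ => 0) (Vn := fun N => atan (x N))); auto.
   intros; apply atan_nonneg; left; auto. apply cv_const. }
 assert (Hl1 : l <= PI/2). { apply (Rle_cv_lim (Un := fun N => atan (x N)) (Vn := fun _ => PI/2)); auto.
   intros; pose proof (atan_bound (x n)); lra. apply cv_const. }
 pose proof PI_RGT_0.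
 destruct Hl1 as [Hl1|Hl1].
 - left. exists (tan l). apply (cv_ext (fun N => tan (atan (x N)))). apply cv_tan; auto. lra.
   intros; apply tan_atan.
 - right. rewrite <- tan_0. apply (cv_ext (fun N => tan (atan (/ x N)))).
   + apply cv_tan; [|lra]. apply (cv_ext (fun N => PI/2 - atan (x N))).
     replace 0 with (PI/2 - l) by lra. apply CV_minus; auto. apply cv_const.
     intros; rewrite atan_inv; auto.
   + intros; apply tan_atan. Qed.

Definition Mk d RN k N := monomial d RN k N.

Lemma valid0_mono d RN k N : valid d RN 0 k -> monomial d RN k N = 1.
Proof. intros [_ S]. unfold monomial. transitivity (prodR d (fun _ => 1)); [|apply prodR_one].
 apply prodR_ext; intros a Ha. transitivity (prodR d (fun _ => 1)); [|apply prodR_one].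
 apply prodR_ext; intros b Hb. unfold ksum in S.
 pose proof (sumN_eq0 _ _ S a Ha) as S2. simpl in S2. rewrite (sumN_eq0 _ _ S2 b Hb). reflexivity. Qed.

Lemma pair_cv d RN m k1 k2 : AssumptionA d RN -> valid d RN m k1 -> valid d RN m k2 ->
  exists l, Un_cv (fun N => atan (monomial d RN k1 N / monomial d RN k2 N)) l.
Proof. intros [_ A2] V1 V2.
 destruct m as [|m].
 - exists (atan 1). apply (cv_ext (fun _ => atan 1)). apply cv_const. intros N.
   rewrite (valid0_mono _ _ _ _ V1), (valid0_mono _ _ _ _ V2). f_equal. field.
 - destruct (classic (k1 = k2)) as [E|E].
   + subst. exists (atan 1). apply (cv_ext (fun _ => atan 1)). apply cv_const. intros N.
     f_equal. pose proof (mono_pos _ _ _ _ N V2). field. lra.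
   + apply (A2 (S m)); [lia| | |auto]; destruct V1, V2; split; auto. Qed.

Lemma pair_cases d RN m k1 k2 : AssumptionA d RN -> valid d RN m k1 -> valid d RN m k2 ->
  (exists c, Un_cv (fun N => monomial d RN k1 N / monomial d RN k2 N) c) \/
  Un_cv (fun N => monomial d RN k2 N / monomial d RN k1 N) 0.
Proof. intros A V1 V2. destruct (pair_cv d RN m k1 k2 A V1 V2) as [l Hl].
 assert (P : forall N, 0 < monomial d RN k1 N / monomial d RN k2 N).
 { intros; apply Rdiv_lt_0_compat; eapply mono_pos; eauto. }
 destruct (atan_cv_cases _ _ P Hl) as [H|H]; [left; auto|right].
 apply (cv_ext _ _ _ H). intros N. pose proof (mono_pos _ _ _ _ N V1). pose proof (mono_pos _ _ _ _ N V2).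
 field. split; lra. Qed.

Lemma dominant d RN m (K : list (nat -> nat -> nat)) : AssumptionA d RN -> K <> nil ->
  (forall k, In k K -> valid d RN m k) ->
  exists k0, In k0 K /\ forall k, In k K -> exists c, Un_cv (fun N => monomial d RN k N / monomial d RN k0 N) c.
Proof. intros A. induction K as [|k K IH]; intros Hne HV; [congruence|].
 assert (Vk : valid d RN m k) by (apply HV; left; auto).
 assert (self : forall k', valid d RN m k' -> Un_cv (fun N => monomial d RN k' N / monomial d RN k' N) 1).
 { intros k' V'. apply (cv_ext (fun _ => 1)). apply cv_const. intros N. pose proof (mono_pos _ _ _ _ N V'). field. lra. }
 destruct K as [|k1 K'].
 - exists k. split; [left; auto|]. intros k' [<-|[]]. exists 1. apply self; auto.
 - destruct IH as (k0 & H0 & Hd). congruence. intros; apply HV; right; auto.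
   assert (V0 : valid d RN m k0) by (apply HV; right; auto).
   destruct (pair_cases d RN m k k0 A Vk V0) as [[c Hc]|Hz].
   + exists k0. split; [right; auto|]. intros k' [<-|Hk']. exists c; auto. apply Hd; auto.
   + exists k. split; [left; auto|]. intros k' [<-|Hk']. exists 1. apply self; auto.
     destruct (Hd k' Hk') as [c Hc]. exists (c * 0).
     apply (cv_ext (fun N => (monomial d RN k' N / monomial d RN k0 N) * (monomial d RN k0 N / monomial d RN k N))).
     apply CV_mult; auto. intros N. pose proof (mono_pos _ _ _ _ N V0). field.
     pose proof (mono_pos _ _ _ _ N Vk). split; lra. Qed.

Lemma evalL_lim d RN m k0 L : valid d RN m k0 ->
  Forall (fun p => 0 <= fst p /\ valid d RN m (snd p)) L ->
  (forall c k, In (c, k) L -> c = 0 \/ exists l, Un_cv (fun N => monomial d RN k N / monomial d RN k0 N) l) ->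
  exists l, Un_cv (fun N => evalL d RN L N / monomial d RN k0 N) l /\ 0 <= l /\
            forall c, In (c, k0) L -> c <= l.
Proof. intros V0. induction 1 as [|[c k] L [Hc Vk] HF IH]; intros Hcv.
 - exists 0. split. apply (cv_ext (fun _ => 0)). apply cv_const. intros; unfold evalL; simpl; unfold Rdiv; lra.
   split; [lra|]. intros c []. 
 - destruct IH as (l & Hl & Hl0 & Hin). intros; apply Hcv; right; auto.
   simpl in Hc, Vk.
   assert (E : forall N, evalL d RN ((c, k) :: L) N / monomial d RN k0 N =
     c * (monomial d RN k N / monomial d RN k0 N) + evalL d RN L N / monomial d RN k0 N).
   { intros N. unfold evalL; simpl. pose proof (mono_pos _ _ _ _ N V0). field. lra. }
   assert (Hpos : forall N, 0 < monomial d RN k N / monomial d RN k0 N).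
   { intros; apply Rdiv_lt_0_compat; eapply mono_pos; eauto. }
   destruct (Hcv c k (or_introl eq_refl)) as [Z | [lk Hlk]].
   + subst c. exists l. split. apply (cv_ext _ _ _ Hl). intros; rewrite E; lra.
     split; auto. intros c' [Heq|Hi]. inversion Heq; lra. auto.
   + assert (lk0 : 0 <= lk). { apply (Rle_cv_lim (Un := fun _ => 0) (Vn := fun N => monomial d RN k N / monomial d RN k0 N)); auto.
       intros; left; auto. apply cv_const. }
     exists (c * lk + l). split. apply (cv_ext (fun N => c * (monomial d RN k N / monomial d RN k0 N) + evalL d RN L N / monomial d RN k0 N)).
     apply CV_plus; auto. apply CV_mult; auto. apply cv_const. intros; rewrite E; auto.
     split. nra. intros c' [Heq|Hi].
     * inversion Heq; subst. assert (lk = 1). { apply (UL_sequence _ _ _ Hlk). apply (cv_ext (fun _ => 1)). apply cv_const.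
         intros N; pose proof (mono_pos _ _ _ _ N V0); field; lra. } subst. lra.
     * specialize (Hin c' Hi). nra. Qed.

Lemma evalL_pos_coef d RN m L N : Forall (fun p => 0 <= fst p /\ valid d RN m (snd p)) L ->
  0 < evalL d RN L N -> exists c k, In (c, k) L /\ 0 < c.
Proof. induction 1 as [|[c k] L [Hc Vk] HF IH]; intros H.
 - unfold evalL in H; simpl in H; lra.
 - simpl in Hc. destruct (Req_dec c 0).
   + subst. destruct IH as (c'&k'&Hi&Hp). unfold evalL in H; simpl in H. fold (evalL d RN L N) in H. lra.
     exists c', k'; split; auto; right; auto.
   + exists c, k. split; [left; auto|lra]. Qed.

Lemma good_ratio d RN m P Q : AssumptionA d RN -> Good d RN m P -> Good d RN m Q ->
  exists l, Un_cv (fun N => atan (P N / Q N)) l.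
Proof. intros A GP GQ.
 destruct (Good_dich _ _ _ _ GQ) as [Qz|Qp].
 { exists (atan 0). apply (cv_ext (fun _ => atan 0)). apply cv_const. intros N. rewrite Qz. unfold Rdiv. rewrite Rinv_0. f_equal; ring. }
 destruct (Good_dich _ _ _ _ GP) as [Pz|Pp].
 { exists (atan 0). apply (cv_ext (fun _ => atan 0)). apply cv_const. intros N. rewrite Pz. f_equal. unfold Rdiv; ring. }
 destruct GP as (LP & FP & EP). destruct GQ as (LQ & FQ & EQ).
 set (Kpos := map snd (filter (fun p => if Rlt_dec 0 (fst p) then true else false) (LP ++ LQ))).
 assert (FA : Forall (fun p => 0 <= fst p /\ valid d RN m (snd p)) (LP ++ LQ)) by (apply Forall_app; auto).
 assert (InK : forall c k, In (c, k) (LP ++ LQ) -> 0 < c -> In k Kpos).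
 { intros c k Hi Hc. unfold Kpos. apply (in_map snd _ (c, k)). apply filter_In. split; auto. simpl.
   destruct (Rlt_dec 0 c); auto; lra. }
 assert (KV : forall k, In k Kpos -> valid d RN m k).
 { intros k Hk. unfold Kpos in Hk. apply in_map_iff in Hk. destruct Hk as (p & <- & Hp).
   apply filter_In in Hp. destruct Hp as [Hp _]. rewrite Forall_forall in FA. apply FA; auto. }
 assert (KP : forall k, In k Kpos -> exists c, In (c, k) (LP ++ LQ) /\ 0 < c).
 { intros k Hk. unfold Kpos in Hk. apply in_map_iff in Hk. destruct Hk as ([c k'] & <- & Hp).
   apply filter_In in Hp. destruct Hp as [Hp Ht]. exists c. split; auto. simpl in Ht. destruct (Rlt_dec 0 c); auto; discriminate. }
 assert (Kne : Kpos <> nil).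
 { specialize (Pp 0%nat). rewrite EP in Pp. destruct (evalL_pos_coef _ _ _ _ _ FP Pp) as (c & k & Hi & Hc).
   intros E. assert (In k Kpos). apply (InK c); auto. apply in_or_app; auto. rewrite E in H; auto. }
 destruct (dominant d RN m Kpos A Kne KV) as (k0 & Hk0 & Hdom).
 assert (V0 : valid d RN m k0) by auto.
 assert (Hcv : forall L, incl L (LP ++ LQ) -> forall c k, In (c, k) L -> c = 0 \/ exists l, Un_cv (fun N => monomial d RN k N / monomial d RN k0 N) l).
 { intros L Hinc c k Hi. assert (Hi' := Hinc _ Hi). rewrite Forall_forall in FA. destruct (FA _ Hi') as [Hc _]. simpl in Hc.
   destruct Hc as [Hc|Hc]; [right|left; auto]. apply Hdom. apply (InK c); auto. }
 destruct (evalL_lim d RN m k0 LP V0 FP (Hcv LP (incl_appl _ (incl_refl _)))) as (p & Hp & p0 & pin).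
 destruct (evalL_lim d RN m k0 LQ V0 FQ (Hcv LQ (incl_appr _ (incl_refl _)))) as (q & Hq & q0 & qin).
 destruct (KP k0 Hk0) as (c0 & Hc0 & c0p). apply in_app_or in Hc0.
 assert (pq : 0 < p \/ 0 < q). { destruct Hc0 as [H|H]; [left; specialize (pin _ H)|right; specialize (qin _ H)]; lra. }
 assert (M0 : forall N, 0 < monomial d RN k0 N) by (intros; eapply mono_pos; eauto).
 destruct (Req_dec q 0) as [q00|qn0].
 - exists (PI/2 - atan 0). apply (cv_ext (fun N => PI/2 - atan ((evalL d RN LQ N / monomial d RN k0 N) / (evalL d RN LP N / monomial d RN k0 N)))).
   + apply CV_minus. apply cv_const. apply cv_atan. replace 0 with (q / p) by (subst; unfold Rdiv; ring).
     apply cv_div; auto. lra.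
   + intros N. specialize (M0 N). specialize (Pp N). specialize (Qp N). rewrite EP, EQ in *.
     replace (evalL d RN LQ N / monomial d RN k0 N / (evalL d RN LP N / monomial d RN k0 N)) with (/ (evalL d RN LP N / evalL d RN LQ N)).
     rewrite atan_inv. lra. apply Rdiv_lt_0_compat; auto. field. repeat split; lra.
 - exists (atan (p / q)). apply (cv_ext (fun N => atan ((evalL d RN LP N / monomial d RN k0 N) / (evalL d RN LQ N / monomial d RN k0 N)))).
   apply cv_atan. apply cv_div; auto.
   intros N. specialize (M0 N). specialize (Qp N). rewrite EP, EQ in *. f_equal. field. split; lra. Qed.

Lemma HR_ratio d RN k f g : AssumptionA d RN -> HR d RN k f -> HR d RN k g ->
  exists l, Un_cv (fun N => atan (f N / g N)) l.
Proof. intros A (n1&p1&q1&P1&Q1&Q1p&E1) (n2&p2&q2&P2&Q2&Q2p&E2).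
 destruct (good_ratio d RN (n1 + k + n2) (fun N => p1 N * q2 N) (fun N => q1 N * p2 N) A) as [l Hl].
 apply Good_mul; auto. eapply Good_deg; [apply Good_mul; eauto|lia].
 exists l. apply (cv_ext _ _ _ Hl). intros N. rewrite E1, E2. specialize (Q1p N); specialize (Q2p N).
 f_equal. destruct (Req_dec (p2 N) 0) as [Z|Z].
 - rewrite Z. unfold Rdiv. rewrite Rmult_0_r, Rmult_0_l, !Rinv_0. ring.
 - field. repeat split; lra. Qed.

Lemma div_nonneg a b : 0 <= a -> 0 <= b -> 0 <= a / b.
Proof. intros. destruct H0. unfold Rdiv. apply Rmult_le_pos; auto. left; apply Rinv_0_lt_compat; auto.
 subst. unfold Rdiv. rewrite Rinv_0. lra. Qed.

Definition lam d (s : nat -> bool) (Q : nat -> nat -> nat -> R) N z : R :=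
  sumR d (fun b => if (s b && negb (Nat.eqb b z))%bool then Q N z b else 0).

Definition sdel (s : nat -> bool) u : nat -> bool := fun x => (s x && negb (Nat.eqb x u))%bool.

Definition elim d s (Q : nat -> nat -> nat -> R) u : nat -> nat -> nat -> R :=
  fun N a b => Q N a b + Q N a u * Q N u b / lam d s Q N u.

Definition edgeS d (s : nat -> bool) (Q0 : nat -> nat -> R) a b : Prop :=
  (a < d)%nat /\ (b < d)%nat /\ s a = true /\ s b = true /\ a <> b /\ 0 < Q0 a b.

Definition NNQ d s (Q : nat -> nat -> nat -> R) := forall N a b, (a < d)%nat -> (b < d)%nat ->
  s a = true -> s b = true -> a <> b -> 0 <= Q N a b.

Definition IRR d s (Q : nat -> nat -> nat -> R) := forall N a b, (a < d)%nat -> (b < d)%nat ->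
  s a = true -> s b = true -> clos_refl_trans nat (edgeS d s (Q N)) a b.

Definition HRQ d RN s (Q : nat -> nat -> nat -> R) := forall a b, (a < d)%nat -> (b < d)%nat ->
  s a = true -> s b = true -> a <> b -> HR d RN 1 (fun N => Q N a b).

Lemma sdel_true s u x : sdel s u x = true <-> s x = true /\ x <> u.
Proof. unfold sdel. rewrite Bool.andb_true_iff, Bool.negb_true_iff, Nat.eqb_neq. tauto. Qed.

Lemma lam_nonneg d s Q N z : NNQ d s Q -> (z < d)%nat -> s z = true -> 0 <= lam d s Q N z.
Proof. intros H Hz Hs. apply sumR_nonneg. intros b Hb. destruct (s b) eqn:E; destruct (Nat.eqb_spec b z); simpl; try lra.
 apply H; auto. Qed.

Lemma lam_ge d s Q N z b : NNQ d s Q -> (z < d)%nat -> (b < d)%nat -> s z = true -> s b = true -> b <> z ->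
  Q N z b <= lam d s Q N z.
Proof. intros H Hz Hb Hsz Hsb Hne. unfold lam.
 eapply Rle_trans; [|apply (sumR_term _ _ b Hb)]. cbv beta. rewrite Hsb. destruct (Nat.eqb_spec b z); [lia|]. simpl; lra.
 intros i Hi. destruct (s i) eqn:E; destruct (Nat.eqb_spec i z); simpl; try lra. apply H; auto. Qed.

Lemma lam_pos d s Q N u v : NNQ d s Q -> IRR d s Q -> (u < d)%nat -> (v < d)%nat -> s u = true -> s v = true -> u <> v ->
  0 < lam d s Q N u.
Proof. intros NN IR Hu Hv Hsu Hsv Hne. pose proof (IR N u v Hu Hv Hsu Hsv) as P.
 apply clos_rt_rt1n_iff in P. destruct P as [|x y E P]. congruence.
 destruct E as (_&Hx&_&Hsx&Hux&Hq). pose proof (lam_ge d s Q N u x NN Hu Hx Hsu Hsx (not_eq_sym Hux)). lra. Qed.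

Lemma elim_ge d s Q u N a b : NNQ d s Q -> (a < d)%nat -> (b < d)%nat -> (u < d)%nat -> s a = true -> s b = true -> s u = true ->
  a <> u -> b <> u -> a <> b -> Q N a u * Q N u b / lam d s Q N u <= elim d s Q u N a b /\ Q N a b <= elim d s Q u N a b /\
  0 <= Q N a u * Q N u b / lam d s Q N u.
Proof. intros NN Ha Hb Hu Hsa Hsb Hsu Hau Hbu Hab. unfold elim.
 assert (0 <= Q N a u * Q N u b / lam d s Q N u). { apply div_nonneg. apply Rmult_le_pos; apply NN; auto. apply lam_nonneg; auto. }
 assert (0 <= Q N a b) by (apply NN; auto). lra. Qed.

Lemma elim_NN d s Q u : NNQ d s Q -> (u < d)%nat -> s u = true -> NNQ d (sdel s u) (elim d s Q u).
Proof. intros NN Hu Hsu N a b Ha Hb Hsa Hsb Hab. apply sdel_true in Hsa, Hsb.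
 destruct Hsa, Hsb. pose proof (elim_ge d s Q u N a b NN Ha Hb Hu H H1 Hsu H0 H2 Hab). pose proof (NN N a b Ha Hb H H1 Hab). lra. Qed.

Lemma lam_HR d RN s Q z : HRQ d RN s Q -> (z < d)%nat -> s z = true -> HR d RN 1 (fun N => lam d s Q N z).
Proof. intros H Hz Hs. unfold lam. apply (HR_sum d RN 1 d (fun b => (s b && negb (Nat.eqb b z))%bool) (fun b N => Q N z b)).
 intros w Hw E. apply Bool.andb_true_iff in E. destruct E as [E1 E2]. apply Bool.negb_true_iff, Nat.eqb_neq in E2.
 apply H; auto. Qed.

Lemma elim_HR d RN s Q u : HRQ d RN s Q -> (u < d)%nat -> s u = true -> (forall N, 0 < lam d s Q N u) ->
  HRQ d RN (sdel s u) (elim d s Q u).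
Proof. intros H Hu Hsu Lp a b Ha Hb Hsa Hsb Hab. apply sdel_true in Hsa, Hsb. destruct Hsa, Hsb.
 unfold elim. apply HR_add. apply H; auto.
 change 1%nat with (2 - 1)%nat. apply HR_div; auto. apply (HR_mul d RN 1 1); apply H; auto.
 apply lam_HR; auto. Qed.

Lemma path_elim d s Q u N : NNQ d s Q -> (u < d)%nat -> s u = true ->
  forall x y, clos_refl_trans_1n nat (edgeS d s (Q N)) x y -> s x = true -> (x < d)%nat ->
   (x <> u -> y <> u -> clos_refl_trans_1n nat (edgeS d (sdel s u) (elim d s Q u N)) x y) /\
   (x <> u -> y = u -> exists v, v <> u /\ clos_refl_trans_1n nat (edgeS d (sdel s u) (elim d s Q u N)) x v /\ edgeS d s (Q N) v u) /\
   (x = u -> y <> u -> exists v, v <> u /\ edgeS d s (Q N) u v /\ clos_refl_trans_1n nat (edgeS d (sdel s u) (elim d s Q u N)) v y).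
Proof. intros NN Hu Hsu. induction 1 as [x|x x1 y E P IH]; intros Hsx Hx.
 - split; [|split]. intros; constructor. intros; congruence. intros; congruence.
 - pose proof E as (_&Hx1&_&Hsx1&Hxx1&Hq). specialize (IH Hsx1 Hx1). destruct IH as (I1&I2&I3).
   assert (edge1 : forall a b, a <> u -> b <> u -> (a < d)%nat -> (b < d)%nat -> s a = true -> s b = true -> a <> b ->
      (0 < Q N a b \/ (0 < Q N a u /\ 0 < Q N u b)) -> edgeS d (sdel s u) (elim d s Q u N) a b).
   { intros a b Hau Hbu Ha Hb Hsa Hsb Hab Hor. repeat split; auto; try (apply sdel_true; auto).
     pose proof (elim_ge d s Q u N a b NN Ha Hb Hu Hsa Hsb Hsu Hau Hbu Hab) as (G1&G2&G3).
     destruct Hor as [Hor|[Q1 Q2]]. lra.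
     assert (Hl : 0 < lam d s Q N u). { pose proof (lam_ge d s Q N u b NN Hu Hb Hsu Hsb Hbu). lra. }
     assert (0 < Q N a u * Q N u b / lam d s Q N u). { apply Rdiv_lt_0_compat; auto. apply Rmult_lt_0_compat; auto. } lra. }
   split; [|split].
   + intros Hxu Hyu. destruct (Nat.eq_dec x1 u) as [Ex1|Ex1].
     * subst x1. destruct (I3 eq_refl Hyu) as (v & Hvu & Ev & Pv). destruct (Nat.eq_dec x v) as [Exv|Exv]. subst; auto.
       pose proof Ev as (_&Hv&_&Hsv&_&Hqv). apply Relation_Operators.rt1n_trans with v; auto.
     * apply Relation_Operators.rt1n_trans with x1; auto.
   + intros Hxu Hyu. destruct (Nat.eq_dec x1 u) as [Ex1|Ex1].
     * subst x1. exists x. split; auto. split. constructor. auto.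
     * destruct (I2 Ex1 Hyu) as (v & Hvu & Pv & Ev). exists v. split; auto. split; auto.
       apply Relation_Operators.rt1n_trans with x1; auto.
   + intros Hxu Hyu. subst x. exists x1. split; auto. Qed.

Lemma elim_IRR d s Q u : NNQ d s Q -> IRR d s Q -> (u < d)%nat -> s u = true -> IRR d (sdel s u) (elim d s Q u).
Proof. intros NN IR Hu Hsu N a b Ha Hb Hsa Hsb. apply sdel_true in Hsa, Hsb. destruct Hsa, Hsb.
 pose proof (IR N a b Ha Hb H H1) as P. apply clos_rt_rt1n_iff in P.
 destruct (path_elim d s Q u N NN Hu Hsu a b P H Ha) as (I1&_&_). apply clos_rt_rt1n_iff. auto. Qed.

Definition SS d (p : nat -> bool) (G : nat -> R) := sumR d (fun b => if p b then G b else 0).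

Lemma SS_ext d p p' G G' : (forall b, (b < d)%nat -> p b = p' b) -> (forall b, (b < d)%nat -> p b = true -> G b = G' b) ->
  SS d p G = SS d p' G'.
Proof. intros H1 H2. unfold SS. apply sumR_ext. intros b Hb. rewrite <- H1 by auto. destruct (p b) eqn:E; auto. Qed.

Lemma SS_remove d p G w : (w < d)%nat -> p w = true ->
  SS d p G = SS d (fun b => (p b && negb (Nat.eqb b w))%bool) G + G w.
Proof. intros Hw Hp. unfold SS. rewrite (sumR_split _ _ w Hw). rewrite Hp. f_equal.
 apply sumR_ext. intros b Hb. destruct (Nat.eq_dec b w). subst. rewrite Nat.eqb_refl, Bool.andb_false_r. auto.
 apply Nat.eqb_neq in n. rewrite n. rewrite Bool.andb_true_r. auto. Qed.

Lemma SS_lin d p G1 G2 c : SS d p (fun b => G1 b + c * G2 b) = SS d p G1 + c * SS d p G2.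
Proof. unfold SS. rewrite <- sumR_scal, <- sumR_plus. apply sumR_ext. intros. destruct (p i); ring. Qed.

Fixpoint cnt (n : nat) (p : nat -> bool) : nat :=
  match n with O => O | S n' => (cnt n' p + (if p n' then 1 else 0))%nat end.

Lemma cnt_remove n p w : (w < n)%nat -> p w = true -> cnt n p = S (cnt n (fun x => (p x && negb (Nat.eqb x w))%bool)).
Proof. induction n; simpl; intros Hw Hp; [lia|]. destruct (Nat.eq_dec w n).
 - subst. rewrite Hp, Nat.eqb_refl, Bool.andb_false_r.
   assert (cnt n p = cnt n (fun x => (p x && negb (Nat.eqb x n))%bool)).
   { clear. assert (forall m, (m <= n)%nat -> cnt m p = cnt m (fun x => (p x && negb (Nat.eqb x n))%bool)).
     induction m; simpl; intros; auto. rewrite IHm by lia. destruct (Nat.eqb_spec m n); [lia|]. rewrite Bool.andb_true_r. auto.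
     apply H; lia. }
   lia.
 - rewrite IHn by (auto; lia). assert (n =? w = false)%nat by (apply Nat.eqb_neq; auto). rewrite H. rewrite Bool.andb_true_r. lia. Qed.

Lemma cnt_zero n p : cnt n p = 0%nat -> forall w, (w < n)%nat -> p w = false.
Proof. induction n; simpl; intros H w Hw; [lia|]. destruct (p n) eqn:E; [lia|]. rewrite Nat.add_0_r in H.
 destruct (Nat.eq_dec w n); subst; auto. apply IHn; auto; lia. Qed.

Lemma cnt_pos n p m : cnt n p = S m -> exists w, (w < n)%nat /\ p w = true.
Proof. induction n; simpl; intros H; [lia|]. destruct (p n) eqn:E. exists n; split; auto.
 rewrite Nat.add_0_r in H. destruct (IHn H) as (w&?&?). exists w; split; auto. Qed.

Lemma cnt_ext n p p' : (forall x, (x < n)%nat -> p x = p' x) -> cnt n p = cnt n p'.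
Proof. induction n; simpl; intros H; auto. rewrite IHn, H by (auto; lia). auto. Qed.

Lemma lam_SS d s Q N z : lam d s Q N z = SS d (fun b => (s b && negb (Nat.eqb b z))%bool) (fun b => Q N z b).
Proof. reflexivity. Qed.

Lemma lam_elim d s Q u N z : (z < d)%nat -> (u < d)%nat -> s z = true -> s u = true -> z <> u -> lam d s Q N u <> 0 ->
  lam d (sdel s u) (elim d s Q u) N z = lam d s Q N z - Q N z u * Q N u z / lam d s Q N u.
Proof. intros Hz Hu Hsz Hsu Hzu Hl.
 set (p := fun b => (s b && negb (Nat.eqb b u) && negb (Nat.eqb b z))%bool).
 assert (E1 : lam d (sdel s u) (elim d s Q u) N z = SS d p (fun b => Q N z b) + (Q N z u / lam d s Q N u) * SS d p (fun b => Q N u b)).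
 { rewrite lam_SS, <- SS_lin. apply SS_ext. intros; unfold p, sdel; reflexivity. intros; unfold elim; unfold Rdiv; ring. }
 assert (E2 : lam d s Q N z = SS d p (fun b => Q N z b) + Q N z u).
 { rewrite lam_SS, (SS_remove _ _ _ u Hu). f_equal. apply SS_ext; [|auto]. intros; unfold p.
   destruct (s b), (Nat.eqb b u), (Nat.eqb b z); reflexivity. rewrite Hsu. apply Nat.eqb_neq in Hzu.
   rewrite Nat.eqb_sym, Hzu. reflexivity. }
 assert (E3 : lam d s Q N u = SS d p (fun b => Q N u b) + Q N u z).
 { rewrite lam_SS, (SS_remove _ _ _ z Hz). reflexivity.
   rewrite Hsz. apply Nat.eqb_neq in Hzu. rewrite Hzu. reflexivity. }
 rewrite E1, E2. replace (SS d p (fun b => Q N u b)) with (lam d s Q N u - Q N u z) by lra. field. auto. Qed.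

Definition Harm d s Q (A B : nat -> bool) (h : nat -> nat -> R) := forall N z, (z < d)%nat -> s z = true ->
  A z = false -> B z = false ->
  lam d s Q N z * h N z = SS d (fun w => (s w && negb (Nat.eqb w z))%bool) (fun w => Q N z w * h N w).

Definition Bdry d (A B : nat -> bool) (h : nat -> nat -> R) := forall N z, (z < d)%nat ->
  (B z = true -> h N z = 1) /\ (A z = true -> B z = false -> h N z = 0).

Lemma harm_elim d s Q A B h u : (u < d)%nat -> s u = true -> A u = false -> B u = false ->
  (forall N, lam d s Q N u <> 0) -> Harm d s Q A B h -> Harm d (sdel s u) (elim d s Q u) A B h.
Proof. intros Hu Hsu HAu HBu Hl H N z Hz Hsz HAz HBz. apply sdel_true in Hsz. destruct Hsz as [Hsz Hzu].
 specialize (Hl N).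
 rewrite lam_elim by auto.
 set (p := fun b => (s b && negb (Nat.eqb b u) && negb (Nat.eqb b z))%bool).
 assert (E1 : SS d (fun w => (sdel s u w && negb (Nat.eqb w z))%bool) (fun w => elim d s Q u N z w * h N w) =
     SS d p (fun b => Q N z b * h N b) + (Q N z u / lam d s Q N u) * SS d p (fun b => Q N u b * h N b)).
 { rewrite <- SS_lin. apply SS_ext. intros; unfold p, sdel; reflexivity. intros; unfold elim; unfold Rdiv; ring. }
 assert (E2 : lam d s Q N z * h N z = SS d p (fun b => Q N z b * h N b) + Q N z u * h N u).
 { rewrite (H N z Hz Hsz HAz HBz), (SS_remove _ _ _ u Hu). f_equal. apply SS_ext; [|auto]. intros; unfold p.
   destruct (s b), (Nat.eqb b u), (Nat.eqb b z); reflexivity. rewrite Hsu. apply Nat.eqb_neq in Hzu.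
   rewrite Nat.eqb_sym, Hzu. reflexivity. }
 assert (E3 : lam d s Q N u * h N u = SS d p (fun b => Q N u b * h N b) + Q N u z * h N z).
 { rewrite (H N u Hu Hsu HAu HBu), (SS_remove _ _ _ z Hz). reflexivity.
   rewrite Hsz. apply Nat.eqb_neq in Hzu. rewrite Hzu. reflexivity. }
 rewrite E1.
 assert (SS d p (fun b => Q N u b * h N b) = lam d s Q N u * h N u - Q N u z * h N z) by lra.
 assert (SS d p (fun b => Q N z b * h N b) = lam d s Q N z * h N z - Q N z u * h N u) by lra.
 rewrite H0, H1. field. auto. Qed.

Lemma harm_HR d RN (A B : nat -> bool) h : forall n s Q,
  cnt d (fun x => (s x && negb (A x) && negb (B x))%bool) = n ->
  NNQ d s Q -> IRR d s Q -> HRQ d RN s Q ->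
  (exists a, (a < d)%nat /\ s a = true /\ A a = true) ->
  Bdry d A B h -> Harm d s Q A B h ->
  forall z, (z < d)%nat -> s z = true -> HR d RN 0 (fun N => h N z).
Proof. induction n as [|n IH]; intros s Q Hc NN IR HQ (a&Ha&Hsa&HAa) Bd Hh z Hz Hsz.
 - pose proof (cnt_zero _ _ Hc z Hz) as Z. simpl in Z. rewrite Hsz in Z.
   destruct (B z) eqn:EB. apply (HR_ext _ _ _ _ _ (HR_one d RN)). intros; symmetry; apply Bd; auto.
   destruct (A z) eqn:EA; [|discriminate]. apply (HR_ext _ _ _ _ _ (HR_zero d RN 0)). intros; symmetry; apply Bd; auto.
 - destruct (cnt_pos _ _ _ Hc) as (u & Hu & Hpu).
   apply Bool.andb_true_iff in Hpu. destruct Hpu as [Hpu HBu]. apply Bool.andb_true_iff in Hpu. destruct Hpu as [Hsu HAu].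
   apply Bool.negb_true_iff in HAu, HBu.
   assert (Hau : a <> u) by congruence.
   assert (Lp : forall N, 0 < lam d s Q N u) by (intros; apply (lam_pos d s Q N u a); auto).
   assert (IHu : forall z, (z < d)%nat -> sdel s u z = true -> HR d RN 0 (fun N => h N z)).
   { apply (IH (sdel s u) (elim d s Q u)).
     - rewrite (cnt_remove _ _ u Hu) in Hc. injection Hc as Hc. rewrite <- Hc. apply cnt_ext. intros.
       unfold sdel. destruct (s x), (A x), (B x), (Nat.eqb x u); reflexivity.
       rewrite Hsu, HAu, HBu; reflexivity.
     - apply elim_NN; auto.
     - apply elim_IRR; auto.
     - apply elim_HR; auto.
     - exists a. split; auto. split; auto. apply sdel_true; auto.
     - auto.
     - apply harm_elim; auto. intros N; specialize (Lp N); lra. }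
   destruct (Nat.eq_dec z u) as [Ezu|Ezu].
   + subst z. apply (HR_ext d RN 0 (fun N => SS d (fun w => (s w && negb (Nat.eqb w u))%bool) (fun w => Q N u w * h N w) / lam d s Q N u)).
     * change 0%nat with (1 - 1)%nat. apply HR_div; auto. unfold SS.
       apply (HR_sum d RN 1 d _ (fun w N => Q N u w * h N w)). intros w Hw E.
       apply Bool.andb_true_iff in E. destruct E as [E1 E2]. apply Bool.negb_true_iff, Nat.eqb_neq in E2.
       change 1%nat with (1 + 0)%nat. apply (HR_mul d RN 1 0). apply HQ; auto. apply IHu; auto. apply sdel_true; auto.
       apply lam_HR; auto.
     * intros N. rewrite <- (Hh N u Hu Hsu HAu HBu). specialize (Lp N). field. lra.
   + apply IHu; auto. apply sdel_true; auto. Qed.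

Definition Inv d s Q (mu : nat -> nat -> R) := forall N xi, (xi < d)%nat -> s xi = true ->
  SS d (fun eta => (s eta && negb (Nat.eqb eta xi))%bool) (fun eta => mu N eta * Q N eta xi) = mu N xi * lam d s Q N xi.

Lemma inv_elim d s Q mu u : (u < d)%nat -> s u = true -> (forall N, lam d s Q N u <> 0) ->
  Inv d s Q mu -> Inv d (sdel s u) (elim d s Q u) mu.
Proof. intros Hu Hsu Hl H N z Hz Hsz. apply sdel_true in Hsz. destruct Hsz as [Hsz Hzu].
 specialize (Hl N). rewrite lam_elim by auto.
 set (p := fun b => (s b && negb (Nat.eqb b u) && negb (Nat.eqb b z))%bool).
 assert (E1 : SS d (fun w => (sdel s u w && negb (Nat.eqb w z))%bool) (fun w => mu N w * elim d s Q u N w z) =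
     SS d p (fun b => mu N b * Q N b z) + (Q N u z / lam d s Q N u) * SS d p (fun b => mu N b * Q N b u)).
 { rewrite <- SS_lin. apply SS_ext. intros; unfold p, sdel; reflexivity. intros; unfold elim; unfold Rdiv; ring. }
 assert (E2 : mu N z * lam d s Q N z = SS d p (fun b => mu N b * Q N b z) + mu N u * Q N u z).
 { rewrite <- (H N z Hz Hsz), (SS_remove _ _ _ u Hu). f_equal. apply SS_ext; [|auto]. intros; unfold p.
   destruct (s b), (Nat.eqb b u), (Nat.eqb b z); reflexivity. rewrite Hsu. apply Nat.eqb_neq in Hzu.
   rewrite Nat.eqb_sym, Hzu. reflexivity. }
 assert (E3 : mu N u * lam d s Q N u = SS d p (fun b => mu N b * Q N b u) + mu N z * Q N z u).
 { rewrite <- (H N u Hu Hsu), (SS_remove _ _ _ z Hz). reflexivity.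
   rewrite Hsz. apply Nat.eqb_neq in Hzu. rewrite Hzu. reflexivity. }
 rewrite E1.
 replace (SS d p (fun b => mu N b * Q N b u)) with (mu N u * lam d s Q N u - mu N z * Q N z u) by lra.
 replace (SS d p (fun b => mu N b * Q N b z)) with (mu N z * lam d s Q N z - mu N u * Q N u z) by lra.
 field. auto. Qed.

Lemma inv_prop d RN mu : forall n s Q, cnt d s = n ->
  NNQ d s Q -> IRR d s Q -> HRQ d RN s Q -> Inv d s Q mu ->
  exists w : nat -> nat -> R, (forall z, (z < d)%nat -> s z = true -> HR d RN 0 (fun N => w N z)) /\
    (forall N z, (z < d)%nat -> s z = true -> 0 < w N z) /\
    (forall N eta xi, (eta < d)%nat -> (xi < d)%nat -> s eta = true -> s xi = true -> mu N eta * w N xi = mu N xi * w N eta).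
Proof. induction n as [|n IH]; intros s Q Hc NN IR HQ Hi.
 - exists (fun _ _ => 1). split; [intros; apply HR_one|]. split; [intros; lra|].
   intros N eta xi He _ Hse _. pose proof (cnt_zero _ _ Hc eta He). congruence.
 - destruct (classic (exists u v, (u < d)%nat /\ (v < d)%nat /\ s u = true /\ s v = true /\ u <> v)) as [Ex|NEx].
   2:{ exists (fun _ _ => 1). split; [intros; apply HR_one|]. split; [intros; lra|].
       intros N eta xi He Hx Hse Hsx. destruct (Nat.eq_dec eta xi). subst; ring.
       exfalso; apply NEx; exists eta, xi; auto. }
   destruct Ex as (u&v&Hu&Hv&Hsu&Hsv&Huv).
   assert (Lp : forall N, 0 < lam d s Q N u) by (intros; apply (lam_pos d s Q N u v); auto).
   destruct (IH (sdel s u) (elim d s Q u)) as (w' & W1 & W2 & W3).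
   + rewrite (cnt_remove _ _ u Hu Hsu) in Hc. injection Hc as Hc. rewrite <- Hc. reflexivity.
   + apply elim_NN; auto.
   + apply elim_IRR; auto.
   + apply elim_HR; auto.
   + apply inv_elim; auto. intros N; specialize (Lp N); lra.
   + set (pu := fun b => (s b && negb (Nat.eqb b u))%bool).
     set (wu := fun N => SS d pu (fun eta => w' N eta * Q N eta u) / lam d s Q N u).
     exists (fun N z => if Nat.eqb z u then wu N else w' N z).
     assert (Hinu : forall N, mu N u * lam d s Q N u = SS d pu (fun eta => mu N eta * Q N eta u)).
     { intros N. rewrite <- (Hi N u Hu Hsu). reflexivity. }
     assert (Hprop : forall N eta, (eta < d)%nat -> s eta = true -> eta <> u -> mu N eta * wu N = mu N u * w' N eta).
     { intros N eta He Hse Heu. unfold wu. specialize (Lp N).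
       assert (Hs : mu N eta * SS d pu (fun eta0 => w' N eta0 * Q N eta0 u) = w' N eta * SS d pu (fun eta0 => mu N eta0 * Q N eta0 u)).
       { unfold SS. rewrite <- !sumR_scal. apply sumR_ext. intros b Hb. unfold pu.
         destruct (s b) eqn:Es; destruct (Nat.eqb_spec b u); simpl; try ring.
         replace (mu N eta * (w' N b * Q N b u)) with ((mu N eta * w' N b) * Q N b u) by ring. rewrite (W3 N eta b He Hb). ring. apply sdel_true; auto. apply sdel_true; auto. }
       rewrite <- Hinu in Hs. unfold Rdiv. rewrite <- Rmult_assoc, Hs. field. lra. }
     split; [|split].
     * intros z Hz Hsz. destruct (Nat.eqb_spec z u).
       -- unfold wu. change 0%nat with (1 - 1)%nat. apply HR_div; auto. unfold SS.
          apply (HR_sum d RN 1 d _ (fun w N => w' N w * Q N w u)). intros w Hw E.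
          unfold pu in E. apply Bool.andb_true_iff in E. destruct E as [E1 E2]. apply Bool.negb_true_iff, Nat.eqb_neq in E2.
          change 1%nat with (0 + 1)%nat. apply (HR_mul d RN 0 1). apply W1; auto. apply sdel_true; auto. apply HQ; auto.
          apply lam_HR; auto.
       -- apply W1; auto. apply sdel_true; auto.
     * intros N z Hz Hsz. destruct (Nat.eqb_spec z u).
       -- unfold wu. apply Rdiv_lt_0_compat; auto.
          pose proof (IR N v u Hv Hu Hsv Hsu) as P. apply clos_rt_rtn1_iff in P. destruct P as [|y z0 E P]. congruence.
          destruct E as (Hy&_&Hsy&_&Hyu&Hq).
          unfold SS. apply (sumR_pos _ _ y Hy).
          ++ intros i Hi'. destruct (pu i) eqn:E; [|lra]. unfold pu in E. apply Bool.andb_true_iff in E. destruct E as [E1 E2].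
             apply Bool.negb_true_iff, Nat.eqb_neq in E2. apply Rmult_le_pos. left; apply W2; auto. apply sdel_true; auto.
             apply NN; auto.
          ++ unfold pu. rewrite Hsy. apply Nat.eqb_neq in Hyu. rewrite Hyu. simpl. apply Rmult_lt_0_compat; auto.
             apply W2; auto. apply sdel_true; split; auto. apply Nat.eqb_neq; auto.
       -- apply W2; auto. apply sdel_true; auto.
     * intros N eta xi He Hx Hse Hsx. destruct (Nat.eqb_spec xi u), (Nat.eqb_spec eta u); subst.
       -- ring.
       -- apply Hprop; auto.
       -- symmetry. apply Hprop; auto.
       -- apply W3; auto; apply sdel_true; auto. Qed.

Lemma decP_true (P : Prop) : decP P = true <-> P.
Proof. unfold decP. destruct (excluded_middle_informative P); split; auto; discriminate. Qed.
Lemma decP_false (P : Prop) : decP P = false <-> ~ P.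
Proof. unfold decP. destruct (excluded_middle_informative P); split; auto; try discriminate; tauto. Qed.

Lemma decP_T (P : Prop) : decP P = true -> P. Proof. apply decP_true. Qed.
Lemma decP_F (P : Prop) : decP P = false -> ~ P. Proof. apply decP_false. Qed.
Lemma T_decP (P : Prop) : P -> decP P = true. Proof. apply decP_true. Qed.
Lemma F_decP (P : Prop) : ~ P -> decP P = false. Proof. apply decP_false. Qed.

Lemma lim_eq u l : Un_cv u l -> lim u = l.
Proof. intros H. unfold lim. apply (UL_sequence u). apply epsilon_spec. exists l; auto. auto. Qed.

Lemma cv_sum n (c : nat -> R) (u : nat -> nat -> R) (l : nat -> R) :
  (forall i, (i < n)%nat -> Un_cv (fun k => u k i) (l i)) ->
  Un_cv (fun k => sumR n (fun i => c i * u k i)) (sumR n (fun i => c i * l i)).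
Proof. induction n; intros H; simpl. apply cv_const.
 apply CV_plus. apply IHn; intros; apply H; lia. apply CV_mult. apply cv_const. apply H; lia. Qed.

Definition sD d : nat -> bool := fun b => Nat.ltb b d.

Lemma holding_lam d RN N z : holding d (RN N) z = lam d (sD d) RN N z.
Proof. unfold holding, lam. apply sumR_ext. intros b Hb. unfold sD. apply Nat.ltb_lt in Hb. rewrite Hb.
 destruct (Nat.eq_dec b z). subst; rewrite Nat.eqb_refl; reflexivity. apply Nat.eqb_neq in n; rewrite n; reflexivity. Qed.

Lemma NN_sD d RN : (forall N eta xi, (eta < d)%nat -> (xi < d)%nat -> eta <> xi -> 0 <= RN N eta xi) -> NNQ d (sD d) RN.
Proof. intros H N a b Ha Hb _ _ Hab; auto. Qed.

Lemma IRR_sD d RN : (forall N, irreducible d (RN N)) -> IRR d (sD d) RN.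
Proof. intros H N a b Ha Hb _ _. specialize (H N a b Ha Hb). unfold reach in H. clear Ha Hb.
 induction H. apply rt_step. destruct H as (?&?&?&?). repeat split; auto; apply Nat.ltb_lt; auto.
 apply rt_refl. eapply rt_trans; eauto. Qed.

Lemma HRQ_sD d RN : AssumptionA d RN -> HRQ d RN (sD d) RN.
Proof. intros A a b Ha Hb _ _ Hab. apply HR_of_Good. apply Good_rate; auto. Qed.

Lemma holding_pos d (RN : nat -> nat -> nat -> R) N z v : (forall N eta xi, (eta < d)%nat -> (xi < d)%nat -> eta <> xi -> 0 <= RN N eta xi) ->
  (forall N, irreducible d (RN N)) -> (z < d)%nat -> (v < d)%nat -> z <> v -> 0 < holding d (RN N) z.
Proof. intros NN IR Hz Hv Hzv. rewrite holding_lam. apply (lam_pos d (sD d) RN N z v).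
 apply NN_sD; auto. apply IRR_sD; auto. auto. auto. apply Nat.ltb_lt; auto. apply Nat.ltb_lt; auto. auto. Qed.

Lemma jumpP_nonneg d R0 z w : (forall xi, (xi < d)%nat -> xi <> z -> 0 <= R0 z xi) -> 0 < holding d R0 z -> (w < d)%nat ->
  0 <= jumpP d R0 z w.
Proof. intros H Hp Hw. unfold jumpP. destruct (Nat.eq_dec w z). lra. apply div_nonneg; auto. lra. Qed.

Lemma holding_jumpP d R0 z w : 0 < holding d R0 z -> holding d R0 z * jumpP d R0 z w = if Nat.eq_dec w z then 0 else R0 z w.
Proof. intros H. unfold jumpP. destruct (Nat.eq_dec w z). ring. field. lra. Qed.

Lemma jumpP_sum d R0 z : 0 < holding d R0 z -> sumR d (fun w => jumpP d R0 z w) = 1.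
Proof. intros H. apply (Rmult_eq_reg_l (holding d R0 z)); [|lra]. rewrite <- sumR_scal, Rmult_1_r.
 rewrite (sumR_ext _ _ (fun w => if Nat.eq_dec w z then 0 else R0 z w)). reflexivity.
 intros; apply holding_jumpP; auto. Qed.

Lemma hw_S d R0 A B n z : hit_within d R0 A B (S n) z =
  if decP (B z) then 1 else if decP (A z) then 0 else sumR d (fun w => jumpP d R0 z w * hit_within d R0 A B n w).
Proof. reflexivity. Qed.

Lemma hw_0 d R0 A B z : hit_within d R0 A B 0 z = if decP (B z) then 1 else if decP (A z) then 0 else 0.
Proof. reflexivity. Qed.

Definition GoodChain d R0 := forall z, (z < d)%nat -> 0 < holding d R0 z /\ forall xi, (xi < d)%nat -> xi <> z -> 0 <= R0 z xi.

Lemma hw_bounds d R0 A B : GoodChain d R0 -> forall n z, (z < d)%nat -> 0 <= hit_within d R0 A B n z <= 1.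
Proof. intros G. induction n; intros z Hz.
 - rewrite hw_0. destruct (decP (B z)), (decP (A z)); lra.
 - rewrite hw_S. destruct (decP (B z)), (decP (A z)); try lra. destruct (G z Hz) as [Hp Hn].
   split. apply sumR_nonneg; intros. apply Rmult_le_pos. apply jumpP_nonneg; auto. apply IHn; auto.
   rewrite <- (jumpP_sum d R0 z Hp). apply sumR_le. intros. pose proof (IHn i H).
   pose proof (jumpP_nonneg d R0 z i Hn Hp H). nra. Qed.

Lemma hw_mono d R0 A B : GoodChain d R0 -> forall n z, (z < d)%nat -> hit_within d R0 A B n z <= hit_within d R0 A B (S n) z.
Proof. intros G. induction n; intros z Hz.
 - rewrite hw_S, hw_0. destruct (decP (B z)), (decP (A z)); try lra. destruct (G z Hz) as [Hp Hn].
   apply sumR_nonneg; intros. apply Rmult_le_pos. apply jumpP_nonneg; auto. apply hw_bounds; auto.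
 - rewrite (hw_S _ _ _ _ (S n)), hw_S. destruct (decP (B z)), (decP (A z)); try lra. destruct (G z Hz) as [Hp Hn].
   apply sumR_le. intros. apply Rmult_le_compat_l. apply jumpP_nonneg; auto. apply IHn; auto. Qed.

Definition hlim d R0 A B z := lim (fun n => hit_within d R0 A B n z).

Lemma hw_cv d R0 A B z : GoodChain d R0 -> (z < d)%nat -> Un_cv (fun n => hit_within d R0 A B n z) (hlim d R0 A B z).
Proof. intros G Hz. destruct (growing_cv (fun n => hit_within d R0 A B n z)) as [l Hl].
 intros n; apply hw_mono; auto.
 exists 1. intros x [i ->]. apply hw_bounds; auto.
 unfold hlim. rewrite (lim_eq _ _ Hl). auto. Qed.

Lemma hlim_harm d R0 A B z : GoodChain d R0 -> (z < d)%nat -> ~ B z -> ~ A z ->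
  hlim d R0 A B z = sumR d (fun w => jumpP d R0 z w * hlim d R0 A B w).
Proof. intros G Hz HB HA. apply (UL_sequence (fun n => hit_within d R0 A B (S n) z)).
 - apply (cv_ext (fun n => hit_within d R0 A B (n + 1) z)). apply (CV_shift' (fun n => hit_within d R0 A B n z) 1). apply hw_cv; auto.
   intros; rewrite Nat.add_1_r; auto.
 - apply (cv_ext (fun n => sumR d (fun w => jumpP d R0 z w * hit_within d R0 A B n w))).
   apply cv_sum. intros; apply hw_cv; auto.
   intros n. rewrite hw_S. apply decP_false in HB, HA. rewrite HB, HA. reflexivity. Qed.

Lemma escape_eq d R0 A B eta : GoodChain d R0 ->
  escape d R0 A B eta = sumR d (fun w => jumpP d R0 eta w * hlim d R0 A B w).
Proof. intros G. unfold escape. apply lim_eq. apply cv_sum. intros; apply hw_cv; auto. Qed.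

Lemma hlim_B d R0 A B z : B z -> hlim d R0 A B z = 1.
Proof. intros H. unfold hlim. apply lim_eq. apply (cv_ext (fun _ => 1)). apply cv_const.
 intros n. apply decP_true in H. destruct n; simpl; rewrite H; auto. Qed.

Lemma hlim_A d R0 A B z : A z -> ~ B z -> hlim d R0 A B z = 0.
Proof. intros H H'. unfold hlim. apply lim_eq. apply (cv_ext (fun _ => 0)). apply cv_const.
 intros n. apply decP_true in H. apply decP_false in H'. destruct n; simpl; rewrite H, H'; auto. Qed.

Lemma family_HR d (RN : nat -> nat -> nat -> R) (mu : nat -> nat -> R) (A B : nat -> Prop) a v :
  (forall N eta xi, (eta < d)%nat -> (xi < d)%nat -> eta <> xi -> 0 <= RN N eta xi) ->
  (forall N, irreducible d (RN N)) ->
  (forall N, invariant_prob d (RN N) (mu N)) ->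
  AssumptionA d RN ->
  (a < d)%nat -> A a -> ~ B a -> (v < d)%nat -> a <> v ->
  HR d RN 1 (fun N => Cap d (RN N) (mu N) A B / measure d (mu N) A).
Proof. intros NN IR INV AA Ha HAa HBa Hv Hav.
 assert (G : forall N, GoodChain d (RN N)).
 { intros N z Hz. split. destruct (Nat.eq_dec z a). subst. apply (holding_pos d RN N a v); auto.
   apply (holding_pos d RN N z a); auto. intros; apply NN; auto. }
 set (Ab := fun x => decP (A x)). set (Bb := fun x => decP (B x)).
 set (h := fun N z => hlim d (RN N) A B z).
 assert (Hh : forall z, (z < d)%nat -> HR d RN 0 (fun N => h N z)).
 { intros z Hz. apply (harm_HR d RN Ab Bb h _ (sD d) RN eq_refl).
   - apply NN_sD; auto.
   - apply IRR_sD; auto.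
   - apply HRQ_sD; auto.
   - exists a. split; auto. split. apply Nat.ltb_lt; auto. apply T_decP; auto.
   - intros N y Hy. split.
     + intros E. apply decP_T in E. apply hlim_B; auto.
     + intros E1 E2. apply decP_T in E1. apply decP_F in E2. apply hlim_A; auto.
   - intros N y Hy _ HA HB. apply decP_F in HA, HB. unfold h.
     rewrite (hlim_harm d (RN N) A B y (G N) Hy HB HA). rewrite <- holding_lam, <- sumR_scal.
     apply sumR_ext. intros w Hw. rewrite <- Rmult_assoc, holding_jumpP by (apply G; auto).
     unfold sD. apply Nat.ltb_lt in Hw. rewrite Hw. destruct (Nat.eq_dec w y). subst. rewrite Nat.eqb_refl. simpl. ring.
     apply Nat.eqb_neq in n. rewrite n. simpl. reflexivity.
   - auto.
   - apply Nat.ltb_lt; auto. }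
 destruct (inv_prop d RN mu _ (sD d) RN eq_refl) as (w & W1 & W2 & W3).
 { apply NN_sD; auto. } { apply IRR_sD; auto. } { apply HRQ_sD; auto. }
 { intros N xi Hxi _. rewrite <- holding_lam. destruct (INV N) as (_&_&I3). rewrite <- (I3 xi Hxi).
   unfold SS. apply sumR_ext. intros b Hb. unfold sD. apply Nat.ltb_lt in Hb. rewrite Hb.
   destruct (Nat.eq_dec b xi). subst. rewrite Nat.eqb_refl. reflexivity. apply Nat.eqb_neq in n. rewrite n. reflexivity. }
 assert (W1' : forall z, (z < d)%nat -> HR d RN 0 (fun N => w N z)) by (intros; apply W1; auto; apply Nat.ltb_lt; auto).
 assert (W2' : forall N z, (z < d)%nat -> 0 < w N z) by (intros; apply W2; auto; apply Nat.ltb_lt; auto).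
 assert (W3' : forall N eta xi, (eta < d)%nat -> (xi < d)%nat -> mu N eta * w N xi = mu N xi * w N eta)
   by (intros; apply W3; auto; apply Nat.ltb_lt; auto).
 set (W := fun N => sumR d (fun z => w N z)).
 set (WA := fun N => sumR d (fun z => if decP (A z) then w N z else 0)).
 assert (Wp : forall N, 0 < W N).
 { intros N. apply (sumR_pos _ _ a Ha). intros; left; auto. auto. }
 assert (WAp : forall N, 0 < WA N).
 { intros N. apply (sumR_pos _ _ a Ha). intros. destruct (decP (A i)); [left; auto|lra].
   cbv beta. rewrite (T_decP _ HAa). auto. }
 assert (Hmu : forall N eta, (eta < d)%nat -> mu N eta = w N eta / W N).
 { intros N eta He. specialize (Wp N). apply (Rmult_eq_reg_r (W N)); [|lra].
   unfold Rdiv. rewrite Rmult_assoc, Rinv_l, Rmult_1_r by lra. unfold W.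
   destruct (INV N) as (_&I2&_).
   transitivity (sumR d (fun i => mu N eta * w N i)). rewrite sumR_scal; reflexivity.
   transitivity (sumR d (fun i => w N eta * mu N i)). apply sumR_ext; intros. rewrite (W3' N eta i He H); ring.
   rewrite sumR_scal, I2; ring. }
 set (X := fun N eta => sumR d (fun z => if negb (Nat.eqb z eta) then RN N eta z * h N z else 0)).
 set (T := fun N => sumR d (fun eta => if decP (A eta) then (w N eta / WA N) * X N eta else 0)).
 apply (HR_ext d RN 1 T).
 - unfold T. apply (HR_sum d RN 1 d (fun eta => decP (A eta)) (fun eta N => (w N eta / WA N) * X N eta)).
   intros eta He _. change 1%nat with (0 + 1)%nat. apply HR_mul.
   + change 0%nat with (0 - 0)%nat. apply HR_div; auto.
     unfold WA. apply (HR_sum d RN 0 d (fun z => decP (A z)) (fun z N => w N z)). intros; auto.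
   + unfold X. apply (HR_sum d RN 1 d (fun z => negb (Nat.eqb z eta)) (fun z N => RN N eta z * h N z)).
     intros z Hz E. apply Bool.negb_true_iff, Nat.eqb_neq in E. change 1%nat with (1 + 0)%nat. apply HR_mul.
     apply HR_of_Good, Good_rate; auto. apply Hh; auto.
 - intros N. specialize (Wp N). specialize (WAp N).
   assert (EC : Cap d (RN N) (mu N) A B = / W N * sumR d (fun eta => if decP (A eta) then w N eta * X N eta else 0)).
   { unfold Cap. rewrite <- sumR_scal. apply sumR_ext. intros eta He. destruct (decP (A eta)); [|ring].
     assert (In : holding d (RN N) eta * sumR d (fun w0 => jumpP d (RN N) eta w0 * hlim d (RN N) A B w0) = X N eta).
     { unfold X. rewrite <- sumR_scal.
       apply sumR_ext. intros z Hz. rewrite <- Rmult_assoc, holding_jumpP by (apply G; auto).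
       destruct (Nat.eq_dec z eta). subst. rewrite Nat.eqb_refl. simpl. ring.
       apply Nat.eqb_neq in n. rewrite n. simpl. reflexivity. }
     rewrite (Hmu N eta He), escape_eq by auto. rewrite Rmult_assoc, In. unfold Rdiv; ring. }
   assert (EM : measure d (mu N) A = / W N * WA N).
   { unfold measure, WA. rewrite <- sumR_scal. apply sumR_ext. intros eta He. destruct (decP (A eta)); [|ring].
     rewrite (Hmu N eta He). unfold Rdiv; ring. }
   symmetry. rewrite EC, EM. unfold T.
   transitivity (/ WA N * sumR d (fun eta => if decP (A eta) then w N eta * X N eta else 0)).
   field. split; lra.
   rewrite <- sumR_scal. apply sumR_ext. intros. destruct (decP (A i)); [unfold Rdiv; ring|ring]. Qed.

Theorem mainTheorem17 (d : nat) (RN : nat -> nat -> nat -> R) (mu : nat -> nat -> R) :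
  (forall N eta xi, (eta < d)%nat -> (xi < d)%nat -> eta <> xi -> 0 <= RN N eta xi) ->
  (forall N, irreducible d (RN N)) ->
  (forall N, invariant_prob d (RN N) (mu N)) ->
  AssumptionA d RN ->
  (exists a b, recurrent d (Rlim d RN) a /\ recurrent d (Rlim d RN) b /\
               ~ reach d (Rlim d RN) a b) ->
  ordered_on (recurrent d (Rlim d RN))
    (fun a N => Cap d (RN N) (mu N) (rclass d (Rlim d RN) a) (rbreve d (Rlim d RN) a)
                / measure d (mu N) (rclass d (Rlim d RN) a)).
Proof. intros NN IR INV AA _ r s Hr Hs Hrs.
 assert (HF : forall a v, recurrent d (Rlim d RN) a -> (v < d)%nat -> a <> v ->
   HR d RN 1 (fun N => Cap d (RN N) (mu N) (rclass d (Rlim d RN) a) (rbreve d (Rlim d RN) a)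
                / measure d (mu N) (rclass d (Rlim d RN) a))).
 { intros a v Ha Hv Hav. apply (family_HR d RN mu _ _ a v); auto.
   - destruct Ha; auto.
   - split; auto. split; apply rt_refl.
   - intros [_ H]. apply H. split; apply rt_refl. }
 apply (HR_ratio d RN 1); auto.
 - apply (HF r s); auto. destruct Hs; auto.
 - apply (HF s r); auto. destruct Hr; auto. Qed.
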